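(* Let $\upsilon$ be a positive integer, $n$ a nonnegative integer, and $p,q$ real parameters with $q>-1$. Then $y=M_n(p,q,\upsilon;x)$ satisfies $$\Big[xD\,(xD+q+1-\upsilon)_{\upsilon}-(-x)^{\upsilon}(xD-\upsilon n)(xD+n+1-p)_{\upsilon}\Big]y=0,$$ where $D=\frac{d}{dx}$ and, for an operator $T$ and constant $c$, $(T+c)_{\upsilon}=\prod_{k=0}^{\upsilon-1}(T+c+k)$.
   Context: $(a)_k=a(a+1)\cdots(a+k-1)$, $(a)_0=1$, denotes the Pochhammer symbol. For a positive integer $\upsilon$, a nonnegative integer $n$ and real parameters $p,q$ define $$M_n(p,q,\upsilon;x)=(-1)^n(q+1)_{\upsilon n}\sum_{j=0}^{n}(-1)^j\binom{n}{j}\frac{(n+1-p)_{\upsilon j}}{(q+1)_{\upsilon j}}(-x)^{\upsilon j}.$$ *)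

(* Defs.v *)
From HB Require Import structures.
From mathcomp Require Import all_boot all_order all_algebra.
From mathcomp Require Import reals.
Set Implicit Arguments. Unset Strict Implicit. Unset Printing Implicit Defensive.
Import Order.TTheory GRing.Theory Num.Theory.
Local Open Scope ring_scope.

Definition poch {R : ringType} (a : R) (k : nat) : R :=
  \prod_(i < k) (a + i%:R).

Definition Mpoly {R : realType} (n : nat) (p q : R) (u : nat) : {poly R} :=
  ((-1) ^+ n * poch (q + 1) (u * n)) *:
  \sum_(j < n.+1)
     (((-1) ^+ j * 'C(n, j)%:R * poch (n%:R + 1 - p) (u * j)
        / poch (q + 1) (u * j)) *: (- 'X) ^+ (u * j)).

Definition theta {R : ringType} (P : {poly R}) : {poly R} := 'X * P^`().

(* (theta + c)_k P = prod_{i=0}^{k-1} (theta + c + i) applied to P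
   (the factors commute). *)
Fixpoint thetaPoch {R : ringType} (c : R) (k : nat) (P : {poly R}) : {poly R} :=
  match k with
  | 0 => P
  | k'.+1 => let Q := thetaPoch c k' P in theta Q + (c + k'%:R) *: Q
  end.

Definition Lop {R : realType} (n : nat) (p q : R) (u : nat) (y : {poly R})
  : {poly R} :=
  let Z := thetaPoch (n%:R + 1 - p) u y in
  theta (thetaPoch (q + 1 - u%:R) u y)
  - (- 'X) ^+ u * (theta Z - (u * n)%:R *: Z).

(* Main.v *)
Require Import Defs.
From HB Require Import structures.
From mathcomp Require Import all_boot all_order all_algebra.
From mathcomp Require Import reals.
From mathcomp Require Import ring lra.
Import Order.TTheory GRing.Theory Num.Theory.
Local Open Scope ring_scope.

Section S.
Variable R : realType.

Lemma theta_lin (a : R) (P Q : {poly R}) : theta (a *: P + Q) = a *: theta P + theta Q.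
Proof. by rewrite /theta derivD derivZ mulrDr scalerAr. Qed.

Lemma thetaPoch_lin (c a : R) k (P Q : {poly R}) :
  thetaPoch c k (a *: P + Q) = a *: thetaPoch c k P + thetaPoch c k Q.
Proof.
elim: k => [|k IH] //=. rewrite IH theta_lin.
by rewrite !scalerDr scalerA mulrC -scalerA addrACA.
Qed.

Lemma thetaPoch0 (c : R) k : thetaPoch c k 0 = 0.
Proof. by elim: k => [|k IH] //=; rewrite IH /theta deriv0 mulr0 scaler0 addr0. Qed.

Lemma thetaPoch_sum (c : R) k m (F : 'I_m -> {poly R}) :
  thetaPoch c k (\sum_(i < m) F i) = \sum_(i < m) thetaPoch c k (F i).
Proof.
apply: (big_morph (thetaPoch c k)) => [x y|]; last exact: thetaPoch0.
by rewrite -[x]scale1r thetaPoch_lin !scale1r.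
Qed.

Lemma thetaX (m : nat) : theta ('X^m : {poly R}) = m%:R *: 'X^m.
Proof.
rewrite /theta derivXn; case: m => [|m]; first by rewrite mulr0n mulr0 scale0r.
by rewrite /= mulrnAr -exprS scaler_nat.
Qed.

Lemma poch_rec (a : R) k : poch a k.+1 = poch a k * (a + k%:R).
Proof. by rewrite /poch big_ord_recr. Qed.

Lemma thetaPochX (c : R) k m :
  thetaPoch c k ('X^m : {poly R}) = poch (c + m%:R) k *: 'X^m.
Proof.
elim: k => [|k IH] /=; first by rewrite /poch big_ord0 scale1r.
rewrite IH -[_ *: 'X^m]addr0 theta_lin thetaX /theta deriv0 mulr0 addr0.
by rewrite !scalerA addr0 -scalerDl poch_rec; congr (_ *: _); ring.
Qed.

Lemma poch_add (a : R) m k : poch a (m + k) = poch a m * poch (a + m%:R) k.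
Proof.
rewrite /poch big_split_ord /=; congr (_ * _); apply: eq_bigr => i _.
by rewrite natrD addrA.
Qed.

Lemma poch_gt0 (a : R) k : 0 < a -> 0 < poch a k.
Proof.
move=> ha; rewrite /poch; apply: prodr_gt0 => i _.
by apply: ltr_wpDr.
Qed.

Lemma thetaPochZ (c a : R) k (P : {poly R}) :
  thetaPoch c k (a *: P) = a *: thetaPoch c k P.
Proof. by rewrite -[a *: P]addr0 thetaPoch_lin thetaPoch0 addr0. Qed.

Lemma Lop_lin n (p q : R) u (a : R) (P Q : {poly R}) :
  Lop n p q u (a *: P + Q) = a *: Lop n p q u P + Lop n p q u Q.
Proof.
rewrite /Lop !thetaPoch_lin !theta_lin -!mul_polyC; ring.
Qed.

Lemma Lop0 n (p q : R) u : Lop n p q u 0 = 0.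
Proof. by rewrite /Lop !thetaPoch0 /theta deriv0 !mulr0 scaler0 subrr mulr0 subrr. Qed.

Lemma LopX n (p q : R) u m :
  Lop n p q u 'X^m = (m%:R * poch (q + 1 - u%:R + m%:R) u) *: 'X^m
     - ((-1) ^+ u * (m%:R - (u * n)%:R) * poch (n%:R + 1 - p + m%:R) u) *: 'X^(m + u).
Proof.
rewrite /Lop !thetaPochX -[_ *: 'X^m]addr0 theta_lin thetaX.
rewrite -[poch (n%:R + 1 - p + m%:R) u *: 'X^m]addr0 theta_lin thetaX.
rewrite /theta deriv0 mulr0 !addr0.
rewrite exprD (_ : - 'X = (-1) * 'X); last by rewrite mulN1r.
rewrite exprMn -!mul_polyC !(rmorphM, rmorphB, rmorphXn, rmorphN, rmorph1) /=; ring.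
Qed.

Lemma Lop_sum n (p q : R) u m (F : nat -> {poly R}) :
  Lop n p q u (\sum_(0 <= i < m) F i) = \sum_(0 <= i < m) Lop n p q u (F i).
Proof.
apply: (big_morph (Lop n p q u)) => [x y|]; last exact: Lop0.
by rewrite -[x]scale1r Lop_lin !scale1r.
Qed.

Lemma LopZ n (p q : R) u a P : Lop n p q u (a *: P) = a *: Lop n p q u P.
Proof. by rewrite -[a *: P]addr0 Lop_lin Lop0 addr0. Qed.
End S.

Theorem mainTheorem6 (R : realType) (u n : nat) (p q : R) :
  (0 < u)%N -> -1 < q -> Lop n p q u (Mpoly n p q u) = 0.
Proof.
move=> u0 q1.
have q0 : 0 < q + 1 by lra.
pose s : R := (-1) ^+ n * poch (q + 1) (u * n).
pose b (j : nat) : R := s * ((-1) ^+ j * 'C(n, j)%:R * poch (n%:R + 1 - p) (u * j)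
        / poch (q + 1) (u * j)) * (-1) ^+ (u * j).
have -> : Mpoly n p q u = \sum_(0 <= j < n.+1) b j *: 'X^(u * j).
  rewrite /Mpoly scaler_sumr big_mkord; apply: eq_bigr => j _.
  rewrite (_ : - 'X = (-1) *: 'X); last by rewrite scaleN1r.
  by rewrite exprZn !scalerA /b /s mulrA.
rewrite Lop_sum.
under eq_bigr do rewrite LopZ LopX scalerBr !scalerA.
rewrite sumrB big_nat_recl // big_nat_recr //=.
rewrite muln0 mul0r mulr0 (scale0r (('X^0) : {poly R})) add0r subrr mulr0 mul0r mulr0 (scale0r (('X^(u*n+u)) : {poly R})) addr0.
apply/eqP; rewrite subr_eq0; apply/eqP.
rewrite big_nat [in RHS]big_nat; apply: eq_bigr => j /andP [_ jn].
rewrite -mulnSr; congr (_ *: _).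
have e1 : q + 1 - u%:R + (u * j.+1)%:R = q + 1 + (u * j)%:R.
  by rewrite mulnS natrD; ring.
have j1 : (j%:R + 1 : R) != 0 by rewrite natr1 pnatr_eq0.
have hb : 'C(n, j.+1)%:R = (n%:R - j%:R) * 'C(n, j)%:R / (j%:R + 1) :> R.
  apply: (mulIf j1); rewrite mulfVK // mulrC natr1 -natrM mul_bin_left natrM natrB //.
  exact: ltnW.
have Q1 : poch (q + 1) (u * j) != 0 by rewrite gt_eqF // poch_gt0.
have Q2 : poch (q + 1 + (u * j)%:R) u != 0.
  rewrite gt_eqF // poch_gt0 //; apply: ltr_wpDr => //; exact: ler0n.
rewrite e1 /b /s hb mulnSr !poch_add !exprD !exprS !natrD !natrM.
field.
by rewrite -natrM Q1 Q2 j1.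
Qed.
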